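(* For every $n\ge1$, the parity function $\Pi:\{0,1\}^n\to\{0,1\}$ ($\Pi(x)=1$ iff $\sum_{j=1}^n x_j$ is odd) has a $y$-linear quadratization involving $\lfloor n/2\rfloor$ auxiliary variables, and its complement $\overline{\Pi}=1-\Pi$ has a $y$-linear quadratization involving $\lfloor (n-1)/2\rfloor$ auxiliary variables.
   Context: A quadratization of $f:\{0,1\}^n\to\mathbb{R}$ using $m$ auxiliary variables is a polynomial $g(x,y)$ of degree at most $2$ in $x_1,\ldots,x_n,y_1,\ldots,y_m$ such that $f(x)=\min\{g(x,y):y\in\{0,1\}^m\}$ for all $x\in\{0,1\}^n$. It is $y$-linear if it contains no product of two auxiliary variables, i.e. $g(x,y)=q(x)+\sum_{i=1}^m a_i(x)y_i$ with $q$ quadratic and each $a_i$ affine in $x$. *)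

(* Defs.v *)
From HB Require Import structures.
From mathcomp Require Import all_boot all_order all_algebra.
Set Implicit Arguments. Unset Strict Implicit. Unset Printing Implicit Defensive.
Import Order.TTheory GRing.Theory Num.Theory.
Local Open Scope ring_scope.

Section Quad.
Variable R : realFieldType.

Definition bitR (b : bool) : R := (b : nat)%:R.

Definition quad_eval (n : nat) (c : R) (l : 'I_n -> R) (Q : 'I_n -> 'I_n -> R)
  (x : 'I_n -> bool) : R :=
  c + \sum_(j < n) l j * bitR (x j)
    + \sum_(j < n) \sum_(k < n) Q j k * bitR (x j) * bitR (x k).

Definition aff_eval (n : nat) (b : R) (A : 'I_n -> R) (x : 'I_n -> bool) : R :=
  b + \sum_(j < n) A j * bitR (x j).

Definition ylin_eval (n m : nat) (c : R) (l : 'I_n -> R) (Q : 'I_n -> 'I_n -> R)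
  (b : 'I_m -> R) (A : 'I_m -> 'I_n -> R) (x : 'I_n -> bool) (y : 'I_m -> bool) : R :=
  quad_eval c l Q x + \sum_(i < m) aff_eval (b i) (A i) x * bitR (y i).

Definition has_ylin_quadratization (n m : nat) (f : ('I_n -> bool) -> R) : Prop :=
  exists (c : R) (l : 'I_n -> R) (Q : 'I_n -> 'I_n -> R)
         (b : 'I_m -> R) (A : 'I_m -> 'I_n -> R),
    forall x : 'I_n -> bool,
      (forall y : 'I_m -> bool, f x <= ylin_eval c l Q b A x y) /\
      (exists y : 'I_m -> bool, ylin_eval c l Q b A x y = f x).

Definition parity (n : nat) (x : 'I_n -> bool) : R :=
  bitR (odd (\sum_(j < n) (x j : nat))%N).

End Quad.

(* Main.v *)
Require Import Defs.
From HB Require Import structures.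
From mathcomp Require Import all_boot all_order all_algebra.
From mathcomp Require Import zify ring lra.
Import Order.TTheory GRing.Theory Num.Theory.
Local Open Scope ring_scope.

Lemma sumnat (k s : nat) :
  ((\sum_(i < k) (if (2*i+1 < s)%N then s - 2*i - 1 else 0)%N) + minn k s./2 * minn k s./2
   = minn k s./2 * s)%N.
Proof.
elim: k => [|k IH]; first by rewrite big_ord0 min0n.
rewrite big_ord_recr /=.
case: ifP => h.
  have hk : (k < s./2)%N by move: h; lia.
  have e1 : minn k s./2 = k by lia.
  have e2 : minn k.+1 s./2 = k.+1 by lia.
  rewrite e2; rewrite e1 in IH.
  move: h IH; move: (\sum_(i < k) _)%N => S; rewrite !mulSn !mulnS; lia.
have -> : minn k.+1 s./2 = minn k s./2 by move: (negbT h); lia.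
by rewrite addn0.
Qed.

Lemma sqr_id (k s : nat) : (s <= 2*k+1)%N ->
  (s * s = odd s + 4 * \sum_(i < k) (if (2*i+1 < s)%N then s - 2*i - 1 else 0))%N.
Proof.
move=> hs.
have := sumnat k s.
have -> : minn k s./2 = s./2 by lia.
have := odd_double_half s.
move: (s./2) (odd s) => j o.
case: o => /= <- ; nia.
Qed.

Section R.
Variable R : realFieldType.

Lemma ylin_lb n m c l Q b A (x : 'I_n -> bool) (y : 'I_m -> bool) :
  quad_eval c l Q x + \sum_(i < m) (if aff_eval (b i) (A i) x < 0 then aff_eval (b i) (A i) x else 0)
  <= ylin_eval c l Q b A x y :> R.
Proof.
rewrite /ylin_eval lerD2l; apply: ler_sum => i _.
rewrite /bitR; case: (y i) => /=; case: ifP => h.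
- by rewrite mulr1.
- by rewrite mulr1 leNgt h.
- by rewrite mulr0 ltW.
- by rewrite mulr0.
Qed.

Lemma ylin_at n m c l Q b A (x : 'I_n -> bool) :
  ylin_eval c l Q b A x (fun i => aff_eval (b i) (A i) x < 0) =
  quad_eval c l Q x + \sum_(i < m) (if aff_eval (b i) (A i) x < 0 then aff_eval (b i) (A i) x else 0)
  :> R.
Proof.
rewrite /ylin_eval; congr (_ + _); apply: eq_bigr => i _.
by rewrite /bitR; case: ifP => _ /=; rewrite ?mulr1 ?mulr0.
Qed.

Lemma ylin_ok n m c l Q b A (x : 'I_n -> bool) (v : R) :
  quad_eval c l Q x + \sum_(i < m) (if aff_eval (b i) (A i) x < 0 then aff_eval (b i) (A i) x else 0) = v ->
  (forall y, v <= ylin_eval c l Q b A x y) /\ exists y, ylin_eval c l Q b A x y = v.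
Proof.
move=> <-; split; first by move=> y; exact: ylin_lb.
by exists (fun i => aff_eval (b i) (A i) x < 0); rewrite ylin_at.
Qed.

Lemma sumbit n (x : 'I_n -> bool) :
  \sum_(j < n) bitR R (x j) = (\sum_(j < n) (x j : nat))%N%:R.
Proof. by rewrite natr_sum. Qed.

Lemma quadE n (c l0 : R) (x : 'I_n -> bool) :
  quad_eval c (fun _ => l0) (fun _ _ => 1) x =
  c + l0 * (\sum_(j < n) bitR R (x j)) + (\sum_(j < n) bitR R (x j)) ^+ 2.
Proof.
rewrite /quad_eval mulr_sumr expr2 mulr_suml; congr (_ + _).
apply: eq_bigr => j _; rewrite mulr_sumr; apply: eq_bigr => k _.
by rewrite mul1r.
Qed.

Lemma affE n (b0 : R) (x : 'I_n -> bool) :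
  aff_eval b0 (fun _ => -4) x = b0 - 4 * \sum_(j < n) bitR R (x j).
Proof.
by rewrite /aff_eval mulr_sumr -sumrN; congr (_ + _); apply: eq_bigr => j _; rewrite mulNr.
Qed.

Lemma termE (a s : nat) :
  (if (4 * a%:R - 4 * s%:R : R) < 0 then 4 * a%:R - 4 * s%:R else 0 : R)
  = - (4 * ((if (a < s)%N then s - a else 0)%N)%:R).
Proof.
case: ltnP => h.
  have H : a%:R < s%:R :> R by rewrite ltr_nat.
  have -> : (4 * a%:R - 4 * s%:R : R) < 0 by lra.
  rewrite natrB; last exact: ltnW h.
  ring.
have H : s%:R <= a%:R :> R by rewrite ler_nat.
have -> : ((4 * a%:R - 4 * s%:R : R) < 0) = false.
  by apply/negbTE; rewrite -leNgt; lra.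
by rewrite mulr0 oppr0.
Qed.


Lemma sqr_id' (k s : nat) : (s <= 2*k+1)%N ->
  (s * s = odd s + 4 * \sum_(i < k) (if (2*i+1 < s)%N then s - (2*i+1) else 0))%N.
Proof.
move=> h; rewrite (@sqr_id k s h); congr (_ + 4 * _)%N.
by apply: eq_bigr => i _; rewrite subnDA.
Qed.

Lemma parR (s m : nat) : (s <= 2 * m + 1)%N ->
  (s%:R)^+2 + \sum_(i < m) (if (4 * ((2*i+1)%N)%:R - 4 * s%:R : R) < 0
                            then 4 * ((2*i+1)%N)%:R - 4 * s%:R else 0 : R)
  = bitR R (odd s).
Proof.
move=> h.
under eq_bigr => i _ do rewrite termE.
rewrite sumrN -mulr_sumr -natr_sum.
set P := (\sum_(i < m) _)%N.
have e : (s * s = odd s + 4 * P)%N by exact: sqr_id'.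
rewrite expr2 -natrM e natrD natrM /bitR.
ring.
Qed.

Lemma compR (s m : nat) : (s <= 2 * m + 2)%N ->
  1 + -2 * s%:R + (s%:R)^+2 + \sum_(i < m) (if (4 * ((2*i+2)%N)%:R - 4 * s%:R : R) < 0
                            then 4 * ((2*i+2)%N)%:R - 4 * s%:R else 0 : R)
  = 1 - bitR R (odd s).
Proof.
case: s => [|t] h.
  rewrite big1; last by move=> i _; rewrite termE ltn0 mulr0 oppr0.
  by rewrite /bitR /=; ring.
have ht : (t <= 2 * m + 1)%N by lia.
have e := (@parR t m ht).
rewrite (eq_bigr (fun i : 'I_m => if (4 * ((2*i+1)%N)%:R - 4 * t%:R : R) < 0
                            then 4 * ((2*i+1)%N)%:R - 4 * t%:R else 0 : R)); last first.
  by move=> i _; rewrite !termE (_ : (2 * i + 2 = (2 * i + 1).+1)%N); last by rewrite addnS.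
set X := \sum_(i < m) _.
rewrite (_ : X = bitR R (odd t) - t%:R ^+ 2); last by rewrite -e addrAC subrr add0r.
rewrite /bitR /= -addn1 natrD.
by case: (odd t) => /=; ring.
Qed.

End R.

Theorem theorem6 (R : realFieldType) (n : nat) (hn : (1 <= n)%N) :
  has_ylin_quadratization n./2 (@parity R n) /\
  has_ylin_quadratization (n - 1)./2 (fun x => 1 - @parity R n x).
Proof.
split.
- exists 0, (fun _ => 0), (fun _ _ => 1), (fun i : 'I_(n./2) => 4 * ((2*i+1)%N)%:R),
    (fun _ _ => -4) => x.
  set s := (\sum_(j < n) (x j : nat))%N.
  have hs : (s <= n)%N.
    rewrite /s -[X in (_ <= X)%N]card_ord -sum1_card.
    by apply: leq_sum => j _; case: (x j).
  have V : quad_eval 0 (fun _ => 0) (fun _ _ => 1) x +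
      \sum_(i < n./2) (if aff_eval (R:=R) (4 * ((2*i+1)%N)%:R) (fun _ => -4) x < 0
         then aff_eval (R:=R) (4 * ((2*i+1)%N)%:R) (fun _ => -4) x else 0) = parity R x.
    rewrite quadE; under [\sum_(i < n./2) _]eq_bigr => i _ do rewrite affE.
    rewrite sumbit mul0r addr0 add0r parR //; lia.
  exact: ylin_ok V.
- exists 1, (fun _ => -2), (fun _ _ => 1), (fun i : 'I_((n-1)./2) => 4 * ((2*i+2)%N)%:R),
    (fun _ _ => -4) => x.
  set s := (\sum_(j < n) (x j : nat))%N.
  have hs : (s <= n)%N.
    rewrite /s -[X in (_ <= X)%N]card_ord -sum1_card.
    by apply: leq_sum => j _; case: (x j).
  have V : quad_eval 1 (fun _ => -2) (fun _ _ => 1) x +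
      \sum_(i < (n-1)./2) (if aff_eval (R:=R) (4 * ((2*i+2)%N)%:R) (fun _ => -4) x < 0
         then aff_eval (R:=R) (4 * ((2*i+2)%N)%:R) (fun _ => -4) x else 0) = 1 - parity R x.
    rewrite quadE; under [\sum_(i < (n-1)./2) _]eq_bigr => i _ do rewrite affE.
    rewrite sumbit compR //; lia.
  exact: ylin_ok V.
Qed.
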